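(* Let $X$ be a finite group with $|X|=n$ and let $S\subseteq X$ be a generating set with $|S|=d$ and $S^{-1}=S$. Let $G$ be the Cayley graph $(X,S)$, and suppose $G$ is not bipartite. Assume $\beta(G)<\tfrac{1}{16d}$. Then $$h(G)\leq \frac{100\,\beta(G)}{1-16d\,\beta(G)}.$$
   Context: The Cayley graph $(X,S)$ has vertex set $X$ and edges $g\sim gs$ for all $g\in X$, $s\in S$; it is $d$-regular. For $A,B\subseteq X$, $e(A,B)$ is the number of ordered pairs $(a,b)\in A\times B$ with $a\sim b$. For $A\subseteq X$, $\partial(A)$ is the set of edges with exactly one endpoint in $A$. The edge Cheeger constant is $h(G)=\min\{|\partial(A)|/(d|A|) : A\subseteq X,\ 0<|A|\le n/2\}$. For disjoint $L,R\subseteq X$ with $L\cup R\ne\emptyset$, $b(L,R)=\dfrac{e(L,L)+e(R,R)+|\partial(L\cup R)|}{d\,|L\cup R|}$, and the bipartiteness constant is $\beta(G)=\min_{L,R}b(L,R)$ over all such pairs. *)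

(* Defs.v *)
From HB Require Import structures.
From mathcomp Require Import all_boot all_order all_algebra all_fingroup.
Set Implicit Arguments. Unset Strict Implicit. Unset Printing Implicit Defensive.
Import Order.TTheory GRing.Theory Num.Theory.
Local Open Scope ring_scope.

Section Cayley.
Variable gT : finGroupType.
Variable S : {set gT}.

Definition cay_adj (a b : gT) : bool := ((a^-1 * b)%g \in S).

(* unordered edges {g, g s} (a singleton for a loop) *)
Definition cay_edges : {set {set gT}} :=
  [set [set x.1; (x.1 * x.2)%g] | x in setX [set: gT] S].

Definition e_cnt (A B : {set gT}) : nat :=
  #|[set p in setX A B | cay_adj p.1 p.2]|.

Definition cay_boundary (A : {set gT}) : {set {set gT}} :=
  [set E in cay_edges | (#|E :&: A| == 1)%N && (#|E :\: A| == 1)%N].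

Variable R : realFieldType.

Definition d_deg : nat := #|S|.

Definition cheeger_ratio (A : {set gT}) : R :=
  (#|cay_boundary A|)%:R / ((d_deg)%:R * (#|A|)%:R).

Definition cheeger_adm (A : {set gT}) : bool :=
  (0 < #|A|)%N && (2 * #|A| <= #|[set: gT]|)%N.

Definition cheeger_h : R :=
  match [pick A | cheeger_adm A] with
  | Some A0 => \big[Num.min/ cheeger_ratio A0]_(A | cheeger_adm A) cheeger_ratio A
  | None => 0
  end.

Definition bip_ratio (LR : {set gT} * {set gT}) : R :=
  ((e_cnt LR.1 LR.1 + e_cnt LR.2 LR.2 + #|cay_boundary (LR.1 :|: LR.2)|)%N)%:R
  / ((d_deg)%:R * (#|LR.1 :|: LR.2|)%:R).

Definition bip_adm (LR : {set gT} * {set gT}) : bool :=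
  [disjoint LR.1 & LR.2] && (LR.1 :|: LR.2 != set0).

Definition bip_beta : R :=
  match [pick LR | bip_adm LR] with
  | Some LR0 => \big[Num.min/ bip_ratio LR0]_(LR | bip_adm LR) bip_ratio LR
  | None => 0
  end.

Definition cay_bipartite : Prop :=
  exists L : {set gT}, forall a b : gT, cay_adj a b -> (a \in L) != (b \in L).

End Cayley.

(* Main.v *)
Require Import Defs.
From HB Require Import structures.
From mathcomp Require Import all_boot all_order all_algebra all_fingroup.
From mathcomp Require Import zify ring lra.
Import Order.TTheory GRing.Theory Num.Theory.
Set Implicit Arguments. Unset Strict Implicit. Unset Printing Implicit Defensive.

Section Comb.
Variable gT : finGroupType.
Variable S : {set gT}.
Hypothesis HS : (S^-1)%g = S.

Lemma adj_sym a b : cay_adj S a b -> cay_adj S b a.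
Proof. rewrite /cay_adj => H. by rewrite -HS inE invMg invgK. Qed.

Definition nG := #|gT|.

Definition Pairs (A : {set gT}) : {set gT * gT} :=
  [set p : gT * gT | [&& cay_adj S p.1 p.2, p.1 \in A & p.2 \notin A]].

Lemma bnd_le_pairs A : #|cay_boundary S A| <= #|Pairs A|.
Proof.
apply: leq_trans (leq_imset_card (fun p : gT * gT => [set p.1; p.2]) (Pairs A)).
apply: subset_leq_card; apply/subsetP => E.
rewrite inE => /and3P[HE H1 H2].
move/imsetP: HE => [[x1 x2]]; rewrite inE /= => /andP[_ Hx2] HE; subst E.
case Ha: (x1 \in A); case Hb: ((x1 * x2)%g \in A).
- have: [set x1; (x1 * x2)%g] :\: A = set0.
    apply/setP => y; rewrite !inE; apply/negbTE/negP => /andP[Hy /orP[/eqP Ey|/eqP Ey]];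
    by rewrite Ey ?Ha ?Hb in Hy.
  by move=> E; rewrite E cards0 in H2.
- apply/imsetP; exists (x1, (x1 * x2)%g) => //.
  by rewrite inE /= Ha Hb /cay_adj mulKg Hx2.
- apply/imsetP; exists ((x1 * x2)%g, x1) => /=.
    rewrite inE /= Ha Hb /cay_adj invMg -mulgA mulVg mulg1 andbT.
    by rewrite -HS inE invgK.
  by apply/setP => y; rewrite !inE orbC.
- have: [set x1; (x1 * x2)%g] :&: A = set0.
    apply/setP => y; rewrite !inE; apply/negbTE/negP => /andP[/orP[/eqP Ey|/eqP Ey] Hy];
    by rewrite Ey ?Ha ?Hb in Hy.
  by move=> E; rewrite E cards0 in H1.
Qed.

Lemma pairs_le_bnd A : #|Pairs A| <= #|cay_boundary S A|.
Proof.
rewrite -(@card_in_imset _ _ (fun p : gT * gT => [set p.1; p.2]) (Pairs A)).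
- apply: subset_leq_card; apply/subsetP => E /imsetP[[a b]].
  rewrite inE /= => /and3P[Hab Ha Hb] ->.
  rewrite inE; apply/and3P; split.
  + apply/imsetP; exists (a, (a^-1 * b)%g); first by rewrite !inE /=.
    by rewrite /= mulKVg.
  + have ->: [set a; b] :&: A = [set a]; last by rewrite cards1.
    apply/setP => y; rewrite !inE.
    case: (eqVneq y a) => [->|ya]; first by rewrite Ha.
    case: (eqVneq y b) => [->|yb]; by rewrite ?(negbTE Hb) ?andbF.
  + have ->: [set a; b] :\: A = [set b]; last by rewrite cards1.
    apply/setP => y; rewrite !inE.
    case: (eqVneq y b) => [->|yb]; first by rewrite Hb orbT.
    case: (eqVneq y a) => [->|ya]; by rewrite ?Ha ?andbF.
- move=> [a b] [a' b']; rewrite !inE /= => /and3P[_ Ha Hb] /and3P[_ Ha' Hb'] E.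
  have: a \in [set a'; b'] by rewrite -E !inE eqxx.
  have: b \in [set a'; b'] by rewrite -E !inE eqxx orbT.
  rewrite !inE => /orP[/eqP E1|/eqP E1] /orP[/eqP E2|/eqP E2]; subst => //.
  - by rewrite Ha' in Hb.
  - by rewrite Ha' in Hb.
  - by rewrite Ha in Hb'.
Qed.

Lemma bnd_compl A : cay_boundary S (~: A) = cay_boundary S A.
Proof.
apply/setP => E; rewrite !inE [E :\: ~: A]setDE setCK -setDE.
by case: (E \in cay_edges S); case: (_ == 1); case: (_ == 1).
Qed.


Variables L R : {set gT}.

Definition col (g : gT) : option bool :=
  if g \in L then Some true else if g \in R then Some false else None.

Definition U := L :|: R.

Lemma colN g : (col g != None) = (g \in U).
Proof. by rewrite /col /U inE; case: (g \in L); case: (g \in R). Qed.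

Lemma colN2 g : ((g \in L) || (g \in R)) = (col g != None).
Proof. by rewrite /col; case: (g \in L); case: (g \in R). Qed.

Definition B : {set gT * gT} := [set p : gT * gT |
  [&& cay_adj S p.1 p.2, col p.1 != None & col p.2 != omap negb (col p.1)]].

Definition Nb := (e_cnt S L L + e_cnt S R R + #|cay_boundary S U|)%N.

Lemma B_le : #|B| <= Nb.
Proof.
have sub : B \subset ([set p in setX L L | cay_adj S p.1 p.2] :|:
   [set p in setX R R | cay_adj S p.1 p.2]) :|: Pairs U.
  apply/subsetP => -[a b]; rewrite !inE /col /=.
  by case: (cay_adj S a b); case: (a \in L); case: (a \in R); case: (b \in L); case: (b \in R).
apply: leq_trans (subset_leq_card sub) _.
apply: leq_trans (leq_card_setU _ _).1 _.
rewrite /Nb leq_add //; first exact: (leq_card_setU _ _).1.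
exact: pairs_le_bnd.
Qed.

Definition W (e : bool) (x : gT) : {set gT} :=
  [set g | (col g != None) && (col g == omap (addb e) (col (x^-1 * g)%g))].

Lemma W_pairs e x : #|Pairs (W e x)| <= 2 * Nb.
Proof.
pose f := fun p : gT * gT => ((x^-1 * p.1)%g, (x^-1 * p.2)%g).
have finj : injective f.
  by move=> [a b] [a' b'] [/mulgI -> /mulgI ->].
have sub : Pairs (W e x) \subset B :|: f @^-1: B.
  apply/subsetP => -[g h]; rewrite !inE /= => /and3P[Hadj Hg Hh].
  have Hadj' : cay_adj S (x^-1 * g)%g (x^-1 * h)%g.
    by rewrite /cay_adj invMg invgK -mulgA mulKVg.
  rewrite Hadj Hadj' /=.
  move: Hg Hh.
  case: (col g) => [[]|]; case: (col h) => [[]|];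
  case: (col (x^-1 * g)%g) => [[]|]; case: (col (x^-1 * h)%g) => [[]|];
  by case: e.
apply: leq_trans (subset_leq_card sub) _.
apply: leq_trans (leq_card_setU _ _).1 _.
by rewrite card_preimset // mul2n -addnn leq_add // B_le.
Qed.

Lemma bnd_W e x : #|cay_boundary S (W e x)| <= 2 * Nb.
Proof. exact: leq_trans (bnd_le_pairs _) (W_pairs e x). Qed.

Lemma bnd_U : #|cay_boundary S U| <= Nb.
Proof. by rewrite /Nb leq_addl. Qed.

Lemma W_sum x : 2 * #|U| <= #|W false x| + #|W true x| + nG.
Proof.
pose U' := (mulg x^-1)%g @^-1: U.
have cU' : #|U'| = #|U| by rewrite card_preimset //; exact: mulgI.
have sub : U :&: U' \subset W false x :|: W true x.
  apply/subsetP => g; rewrite !inE !colN2.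
  by case: (col g) => [[]|]; case: (col (x^-1 * g)%g) => [[]|].
have := cardsUI U U'; rewrite cU' addnn -mul2n => <-.
rewrite addnC leq_add //; last exact: max_card.
apply: leq_trans (subset_leq_card sub) _.
exact: (leq_card_setU _ _).1.
Qed.

Lemma W_disj x : #|W false x| + #|W true x| <= nG.
Proof.
have E : W false x :&: W true x = set0.
  apply/setP => g; rewrite !inE.
  by case: (col g) => [[]|]; case: (col (x^-1 * g)%g) => [[]|].
by rewrite -cardsUI E cards0 addn0 max_card.
Qed.

Lemma W_mul a b x z : #|W a x| + #|W b z| <= nG + #|W (a (+) b) (x * z)%g|.
Proof.
have cV : #|(mulg x^-1)%g @^-1: W b z| = #|W b z| by rewrite card_preimset //; exact: mulgI.
have sub : W a x :&: (mulg x^-1)%g @^-1: W b z \subset W (a (+) b) (x * z)%g.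
  apply/subsetP => g; rewrite !inE invMg -mulgA.
  by case: (col g) => [[]|]; case: (col (x^-1 * g)%g) => [[]|];
     case: (col (z^-1 * (x^-1 * g))%g) => [[]|]; clear cV; case: a; case: b.
rewrite -cV -cardsUI leq_add //; first exact: max_card.
exact: subset_leq_card.
Qed.

Lemma W1 : #|W false 1%g| = #|U|.
Proof.
apply: eq_card => g; rewrite !inE invg1 mul1g colN2.
by case: (col g) => [[]|].
Qed.


Lemma card_sum (T : finType) (A : {set T}) (P : pred T) :
  #|[set y in A | P y]| = \sum_(y in A) (P y : nat).
Proof.
rewrite -sum1_card big_mkcond /= [RHS]big_mkcond /=.
apply: eq_bigr => y _; rewrite !inE; by case: (y \in A); case: (P y).
Qed.

Lemma card_sumT (T : finType) (P : pred T) :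
  #|[set y | P y]| = \sum_y (P y : nat).
Proof.
rewrite -sum1_card big_mkcond /=.
apply: eq_bigr => y _; rewrite !inE; by case: (P y).
Qed.

Definition tau (th : nat) (x : gT) := nG < #|W true x| + th.
Definition T0 th := [set h | ~~ tau th h].
Definition good (h y : gT) := (col (h * y)%g != None) && (col (h * y)%g == col y).
Definition bcnt th (y : gT) := #|[set h in T0 th | ~~ good h y]|.
Definition Bad (s : gT) := [set g | ~~ ((col g != None) && (col (g * s)%g == col g))].


Lemma case3 (th : nat) :
  ~ cay_bipartite S -> 0 < th ->
  2 * th <= nG -> 3 * th <= nG + 1 -> nG < #|U| + th ->
  2 * th + nG < 2 * #|U| + 2 ->
  (forall x e, #|W e x| < th \/ nG < #|W e x| + th) ->
  Nb + 2 * th < nG + 2 -> False.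
Proof.
move=> Hnb Hth0 H2 H3 H1 H4 Hdi Hfin.
have Hdich x : nG < #|W (tau th x) x| + th.
  rewrite /tau; case: (ltnP nG (#|W true x| + th)) => E //.
  have := Hdi x false; case => // Hf.
  have := Hdi x true; case => Ht; last by lia.
  have := W_sum x; lia.
have Huniq x e : nG < #|W e x| + th -> e = tau th x.
  move=> He; case: (eqVneq e (tau th x)) => // Hne; exfalso.
  have := Hdich x; have := W_disj x.
  move: (tau th x) Hne He => t; case: e; case: t => //= Hn Ha Hb Hc; first [done | lia].
have Hmul x z : tau th (x * z)%g = tau th x (+) tau th z.
  symmetry; apply: Huniq.
  have := W_mul (tau th x) (tau th z) x z.
  have := Hdich x; have := Hdich z.
  have := Hdi (x * z)%g (tau th x (+) tau th z). lia.
have Htau1 : tau th 1%g = false by symmetry; apply: Huniq; rewrite W1.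
have HtauV x : tau th (x^-1)%g = tau th x.
  have := Hmul x (x^-1)%g; rewrite mulgV Htau1.
  by move: (tau th x) (tau th (x^-1)%g) => [] [].
have [s Hs Hts] : exists2 s, s \in S & tau th s = false.
  case/boolP: [exists s in S, ~~ tau th s] =>
    [/exists_inP[s Hs /negbTE Hts]|/exists_inPn Hall]; first by exists s.
  exfalso; apply: Hnb; exists [set x | tau th x] => a b Hab; rewrite !inE.
  rewrite -(mulKVg a b) Hmul.
  have := Hall _ Hab; rewrite negbK => ->. by case: (tau th a).
have Hgood h : h \in T0 th -> #|[set y | ~~ good h y]| < th.
  rewrite inE => /negbTE Hh.
  have E1 : [set y | good h y] = (mulg h)%g @^-1: W false h.
    apply/setP => y; rewrite !inE /good mulKg.
    by case: (col (h*y)%g) => [[]|]; case: (col y) => [[]|].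
  have C : #|[set y | good h y]| + #|~: [set y | good h y]| = nG := cardsC _.
  have -> : [set y | ~~ good h y] = ~: [set y | good h y] by apply/setP => y; rewrite !inE.
  rewrite E1 in C *; rewrite card_preimset in C; last exact: mulgI.
  have := Hdich h; rewrite Hh. lia.
have Hkey g : g \in Bad s -> #|T0 th| <= bcnt th g + bcnt th (g * s)%g.
  rewrite inE => Hg.
  pose c := (g * s^-1 * g^-1)%g.
  have Htc : tau th c = false.
    rewrite /c !Hmul !HtauV Hts. by case: (tau th g).
  have sub : T0 th \subset [set h in T0 th | ~~ good h g] :|:
      (mulg^~ c)%g @^-1: [set h in T0 th | ~~ good h (g * s)%g].
    apply/subsetP => h; rewrite !inE => Hh; rewrite Hh /=.
    case Hgd: (good h g) => //=.
    rewrite Hmul Htc addbF Hh /=.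
    rewrite /good; have -> : (h * c * (g * s))%g = (h * g)%g by rewrite /c !mulgA !mulgVK.
    move: Hgd Hg; rewrite /good.
    by case: (col (h * g)%g) => [[]|]; case: (col g) => [[]|]; case: (col (g * s)%g) => [[]|].
  apply: leq_trans (subset_leq_card sub) _.
  apply: leq_trans (leq_card_setU _ _).1 _.
  rewrite card_preimset //; exact: mulIg.
have Hk : 0 < #|T0 th| by apply/card_gt0P; exists 1%g; rewrite inE Htau1.
have Hre : \sum_g bcnt th (g * s)%g = \sum_g bcnt th g.
  by rewrite [RHS](reindex_inj (mulIg s)).
have Hsum : #|Bad s| * #|T0 th| <= 2 * \sum_g bcnt th g.
  rewrite -[#|Bad s|]sum1_card big_distrl /=.
  apply: leq_trans (_ : \sum_(g in Bad s) (bcnt th g + bcnt th (g * s)%g) <= _).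
    by apply: leq_sum => g Hg; rewrite mul1n; exact: Hkey.
  apply: leq_trans (_ : \sum_g (bcnt th g + bcnt th (g * s)%g) <= _).
    rewrite [X in _ <= X]big_mkcond /= [X in X <= _]big_mkcond /=.
    by apply: leq_sum => g _; case: (g \in Bad s).
  by rewrite big_split /= Hre addnn mul2n.
have Hsb : \sum_g bcnt th g <= #|T0 th| * (th - 1).
  rewrite (eq_bigr (fun g => \sum_(h in T0 th) (~~ good h g : nat))); last first.
    by move=> g _; rewrite /bcnt card_sum.
  rewrite exchange_big /= -[#|T0 th|]sum1_card big_distrl /=.
  apply: leq_sum => h Hh; rewrite mul1n.
  have := Hgood h Hh; rewrite card_sumT => H.
  have th0 : 0 < th by apply: leq_ltn_trans H.
  by rewrite -ltnS subn1 prednK.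
have HB : #|Bad s| <= 2 * (th - 1).
  rewrite -(leq_pmul2r Hk); apply: leq_trans Hsum _.
  by rewrite -mulnA leq_mul2l mulnC Hsb orbT.
have HG : #|~: Bad s| <= Nb.
  apply: leq_trans _ B_le.
  rewrite -(@card_imset _ _ (fun g => (g, (g * s)%g)) (~: Bad s)); last by move=> x y [].
  apply: subset_leq_card; apply/subsetP => p /imsetP[g]; rewrite !inE negbK => Hg ->.
  rewrite /= /cay_adj mulKg Hs /=. move: Hg.
  by case: (col g) => [[]|]; case: (col (g * s)%g) => [[]|].
have : #|Bad s| + #|~: Bad s| = nG := cardsC (Bad s). lia.
Qed.


Lemma main_comb : ~ cay_bipartite S -> 0 < #|U| -> 16 * Nb < #|U| -> 2 <= nG ->
  exists A : {set gT}, [/\ 0 < #|A|, 2 * #|A| <= nG &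
     #|cay_boundary S A| * #|U| <= 100 * Nb * #|A|].
Proof.
move=> Hnb Hm HN Hn.
have Hmn : #|U| <= nG := max_card _.
have HbU := bnd_U.
case: (leqP (2 * #|U|) nG) => H2m.
  exists U; split => //; nia.
case: (leqP #|U| (50 * (nG - #|U|))) => H3.
  have cC : #|U| + #|~: U| = nG := cardsC U.
  exists (~: U); rewrite bnd_compl; split; nia.
pose th := (#|U| %/ 50).+1.
have Hm50 : #|U| < 50 * th by rewrite /th; lia.
have Hth50 : 50 * (th - 1) <= #|U| by rewrite /th; lia.
case: (boolP [exists x, exists e, (th <= #|W e x|) && (#|W e x| + th <= nG)]).
  move/existsP => [x /existsP [e /andP [Ha Hb]]].
  have Hbw := bnd_W e x.
  case: (leqP (2 * #|W e x|) nG) => Hw.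
    exists (W e x); split; nia.
  have cC : #|W e x| + #|~: W e x| = nG := cardsC _.
  exists (~: W e x); rewrite bnd_compl; split; nia.
move/negP => Hno; exfalso.
apply: (@case3 th Hnb); try lia.
move=> x e; case: (ltnP #|W e x| th) => h1; [by left|right].
case: (ltnP nG (#|W e x| + th)) => // h2; exfalso; apply: Hno.
apply/existsP; exists x; apply/existsP; exists e; by rewrite h1 h2.
Qed.

End Comb.

Local Open Scope ring_scope.

Theorem theorem4 (R : realFieldType) (gT : finGroupType) (S : {set gT}) :
  <<S>>%g = [set: gT] ->
  (S^-1)%g = S ->
  ~ cay_bipartite S ->
  bip_beta S R < 1 / (16 * (#|S|)%:R) ->
  cheeger_h S R <= 100 * bip_beta S R / (1 - 16 * (#|S|)%:R * bip_beta S R).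
Proof.
move=> _ HS Hnb Hb.
have [LR [HLR Hbeta]] : exists LR, bip_adm LR /\ bip_beta S R = bip_ratio S R LR.
  rewrite /bip_beta; case: pickP => [LR0 HLR0|Hnone].
    apply: (big_ind (fun v => exists LR, bip_adm LR /\ v = bip_ratio S R LR)).
    - by exists LR0.
    - move=> x y [i [Hi ->]] [j [Hj ->]]; rewrite minEle.
      by case: ifP => _; [exists i | exists j].
    - by move=> i Hi; exists i.
  exfalso; have := Hnone ([set 1%g], set0); rewrite /bip_adm /= setU0.
  have -> : [set 1%g] != set0 :> {set gT} by rewrite -card_gt0 cards1.
  rewrite andbT => /negP; apply; rewrite -setI_eq0; apply/eqP; apply/setP => x; by rewrite !inE andbF.
move: HLR; rewrite /bip_adm => /andP[Hdis HU0].
have Hm : (0 < #|U LR.1 LR.2|)%N by rewrite card_gt0.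
have Hratio : bip_ratio S R LR =
   (Nb S LR.1 LR.2)%:R / ((#|S|)%:R * (#|U LR.1 LR.2|)%:R) by [].
rewrite Hbeta Hratio in Hb *.
move: Hm Hb; set Nn := Nb S LR.1 LR.2; set mm := #|U LR.1 LR.2|; set d := #|S| => Hm Hb.
have dpos : (0 < d)%N.
  rewrite lt0n; apply/negP => /eqP d0; move: Hb.
  by rewrite d0 !(mul0r, mulr0, invr0, mulr0n) ltxx.
have dR : (0 : R) < d%:R by rewrite ltr0n.
have mR : (0 : R) < mm%:R by rewrite ltr0n.
have HNm : (16 * Nn < mm)%N.
  rewrite -(ltr_nat R); move: Hb; rewrite ltr_pdivrMr ?mulr_gt0 //.
  have -> : 1 / (16 * d%:R) * (d%:R * mm%:R) = mm%:R / 16 :> R.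
    by field; rewrite ?lt0r_neq0 //; lra.
  by rewrite ltr_pdivlMr ?ltr0n // natrM mulrC.
set beta := Nn%:R / (d%:R * mm%:R).
have b0 : 0 <= beta by rewrite /beta divr_ge0 // mulr_ge0 // ler0n.
have Hb1 : 16 * d%:R * beta < 1.
  have -> : 16 * d%:R * beta = (16 * Nn)%:R / mm%:R.
    by rewrite /beta natrM; field; rewrite ?lt0r_neq0.
  by rewrite ltr_pdivrMr // mul1r ltr_nat.
have RHS0 : 0 <= 100 * beta / (1 - 16 * d%:R * beta).
  apply: divr_ge0; first exact: mulr_ge0. by rewrite subr_ge0 ltW.
rewrite /cheeger_h; case: pickP => [A0 HA0|_]; last exact: RHS0.
have Hn : (1 < nG gT)%N.
  move: HA0; rewrite /cheeger_adm cardsT /nG => /andP[H1 H2].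
  by apply: leq_trans H2; exact: (leq_pmulr 2 H1).
have [A [HA1 HA2 HA3]] := @main_comb gT S HS LR.1 LR.2 Hnb Hm HNm Hn.
have HadmA : cheeger_adm A by rewrite /cheeger_adm HA1 cardsT.
apply: le_trans (bigmin_le_cond _ _ HadmA) _.
rewrite /cheeger_ratio -/d.
have kR : (0 : R) < (#|A|)%:R by rewrite ltr0n.
apply: le_trans (_ : _ <= 100 * beta) _.
  rewrite ler_pdivrMr ?mulr_gt0 //.
  have -> : 100 * beta * (d%:R * (#|A|)%:R) = (100 * Nn * #|A|)%:R / mm%:R.
    by rewrite /beta !natrM; field; rewrite ?lt0r_neq0.
  by rewrite ler_pdivlMr // -natrM ler_nat.
rewrite ler_pdivlMr; last by rewrite subr_gt0.
apply: ler_piMr; first by rewrite mulr_ge0.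
rewrite gerBl; apply: mulr_ge0 => //; apply: mulr_ge0 => //; exact: ler0n.
Qed.
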